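(* Let $l\ge2$, $d\ge2$. For $u\in\sigma^\vee\cap M$ with $\deg(u)=N(l-1)d$ one has $0\le\varphi(u)\le(l-1)N$. Moreover there is a constant $C(l,d)$ depending only on $l,d$ such that for all sufficiently large $N$ and all integers $0\le m\le(l-1)N$, $$\Big|\#\{u\in\sigma^\vee\cap M:\varphi(u)=m,\ \deg(u)=Nd(l-1)\}-d^{ld-1}\frac{(N(l-1)-m)^{l(d-1)-1}}{(l(d-1)-1)!}\Big|\le C(l,d)N^{l(d-1)-2}.$$
   Context: $\mathbf{Z}^{ld}$ has basis $e_{ij}$ ($1\le i\le l,1\le j\le d$), $\epsilon_i=\sum_je_{ij}$, $M=\mathbf{Z}^{ld}/\langle\epsilon_1-\epsilon_2,\dots,\epsilon_1-\epsilon_l\rangle$ with images $e_{ij}$, $\epsilon$; $\sigma^\vee\subset M_\mathbf{R}$ is the cone generated by the $e_{ij}$. $\deg\colon M\to\mathbf{Z}$ is the homomorphism with $\deg(e_{ij})=1$. $\varphi\colon M_\mathbf{R}\to\mathbf{R}$ is defined by $\varphi(u)=\sum_{i=1}^l\min_{1\le j\le d}a_{ij}$ for any representative $u=\sum a_{ij}e_{ij}$ (this is independent of the representative). *)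

(* Defs.v *)
From Stdlib Require Import Rdefinitions.
From HB Require Import structures.
From mathcomp Require Import all_boot all_order all_algebra.
From mathcomp Require Import Rstruct.
Set Implicit Arguments. Unset Strict Implicit. Unset Printing Implicit Defensive.
Import Order.TTheory GRing.Theory Num.Theory.
Local Open Scope ring_scope.

(* Z^{ld}: integer matrices x with entries x i j  (1<=i<=l, 1<=j<=d),
   i.e. x = sum_{ij} x i j * e_ij.  Rows are indexed by 'I_l, index 0 being
   the paper's i = 1. *)
Definition Zld (l d : nat) := 'M[int]_(l, d).

(* x lies in the sublattice generated by eps_1 - eps_k (k = 2..l):
   x = sum_{k>=2} t_k (eps_1 - eps_k), written coefficientwise. *)
Definition inL (l d : nat) (x : Zld l d) : Prop :=
  exists t : 'I_l -> int, forall (i : 'I_l) (j : 'I_d),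
    x i j = if val i == 0%N then \sum_(k : 'I_l | val k != 0%N) t k else - t i.

(* Two representatives define the same element of M. *)
Definition equivM (l d : nat) (a b : Zld l d) : Prop := inL (a - b).

(* The image of a in M lies in sigma^vee (the real cone in M_R generated by
   the e_ij): some nonnegative real combination sum x_ij e_ij has the same
   image in M_R = R^{ld} / <eps_1 - eps_k>_R. *)
Definition in_cone (l d : nat) (a : Zld l d) : Prop :=
  exists x : 'M[R]_(l, d), (forall i j, 0 <= x i j) /\
    exists t : 'I_l -> R, forall (i : 'I_l) (j : 'I_d),
      x i j - (a i j)%:~R =
        if val i == 0%N then \sum_(k : 'I_l | val k != 0%N) t k else - t i.

Definition degM (l d : nat) (a : Zld l d) : int := \sum_i \sum_j a i j.

(* min_{1<=j<=d} a_ij  (for d >= 1; the seed is one of the entries). *)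
Definition rowmin (l d : nat) (a : Zld l d) (i : 'I_l) : int :=
  \big[Num.min/head 0 [seq a i j | j <- enum 'I_d]]_(j : 'I_d) a i j.

Definition phiM (l d : nat) (a : Zld l d) : int := \sum_i rowmin a i.

Definition Pset (l d N m : nat) (a : Zld l d) : Prop :=
  in_cone a /\ phiM a = m%:Z /\ degM a = (N * d * (l - 1))%:Z.

(* s is a complete, irredundant system of representatives of the elements
   of M satisfying P; hence size s = #{u in M : P u}. *)
Definition reps_of (l d : nat) (P : Zld l d -> Prop) (s : seq (Zld l d)) : Prop :=
  (forall a, a \in s -> P a) /\
  (forall a, P a -> exists2 b, b \in s & equivM a b) /\
  (forall i j : nat, (i < size s)%N -> (j < size s)%N ->
     equivM (nth 0 s i) (nth 0 s j) -> i = j).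

(* Main.v *)
Require Import Defs.
From Stdlib Require Import Rdefinitions.
From HB Require Import structures.
From mathcomp Require Import all_boot all_order all_algebra.
From mathcomp Require Import Rstruct.
From mathcomp Require Import zify ring lra.
Import Order.TTheory GRing.Theory Num.Theory.

Section Sec_A.
Set Implicit Arguments. Unset Strict Implicit. Unset Printing Implicit Defensive.

Fixpoint comps (k n : nat) : seq (seq nat) :=
  match k with
  | 0 => if n == 0 then [:: [::]] else [::]
  | k'.+1 => [seq i :: c | i <- iota 0 n.+1, c <- comps k' (n - i)]
  end.

Lemma comps_S k n : comps k.+1 n = [seq i :: c | i <- iota 0 n.+1, c <- comps k (n - i)].
Proof. by []. Qed.

Lemma mem_comps k n c : (c \in comps k n) = (size c == k) && (sumn c == n).
Proof.
elim: k n c => [|k IH] n c.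
  by case: c => [|x c] /=; case: n => [|n] //=.
rewrite comps_S.
case: c => [|x c].
  apply/negbTE/negP; case/allpairsPdep => i [c' [_ _]]; done.
apply/allpairsPdep/idP.
  move=> [i [c' [Hi Hc' [-> ->]]]].
  move: Hc'; rewrite IH => /andP[/eqP Hs /eqP Hn].
  move: Hi; rewrite mem_iota => /andP[_ Hi].
  rewrite /= Hs eqxx /=; apply/eqP; lia.
rewrite /= eqSS => /andP[Hs /eqP Hn].
exists x, c; split => //.
  change (x \in iota 0 n.+1); rewrite mem_iota; apply/andP; split => //; lia.
rewrite IH; apply/andP; split => //; apply/eqP; lia.
Qed.

Lemma hockey n k : \sum_(i < n.+1) 'C(n - i + k, k) = 'C(n + k.+1, k.+1).
Proof.
elim: n => [|n IH]; first by rewrite big_ord_recl big_ord0 /= subn0 add0n addn0 !binn.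
rewrite big_ord_recl /= subn0.
under eq_bigr => i _ do rewrite /bump /= add1n subSS.
rewrite IH.
have -> : (n.+1 + k.+1 = (n + k.+1).+1)%N by lia.
rewrite binS. have -> : (n + k.+1 = n.+1 + k)%N by lia. by rewrite addnC.
Qed.

Lemma size_comps k n : size (comps k.+1 n) = 'C(n + k, k).
Proof.
elim: k n => [|k IH] n.
  rewrite comps_S size_allpairs_dep bin0 sumnE big_map.
  rewrite (_ : iota 0 n.+1 = index_iota 0 n.+1); last by rewrite /index_iota subn0.
  rewrite big_mkord big_ord_recr /= subnn /=.
  rewrite big1 // => i _ /=. have -> : (n - i == 0) = false by apply/negbTE; have := ltn_ord i; lia.
  by [].
rewrite comps_S size_allpairs_dep.
have -> : [seq size (comps k.+1 (n - i)) | i <- iota 0 n.+1] = [seq 'C(n - i + k, k) | i <- iota 0 n.+1].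
  by apply: eq_map => i; rewrite IH.
rewrite sumnE big_map (_ : iota 0 n.+1 = index_iota 0 n.+1); last by rewrite /index_iota subn0.
  rewrite big_mkord hockey.
by congr 'C(_,_); lia.
Qed.

Lemma uniq_comps k n : uniq (comps k n).
Proof.
elim: k n => [|k IH] n; first by rewrite /=; case: (n == 0).
rewrite comps_S; apply: allpairs_uniq_dep; first exact: iota_uniq.
  by move=> i _; apply: IH.
move=> [x c] [y c'] _ _ /= [-> ->]. by [].
Qed.

Section Ptups.
Variable d : nat.
Fixpoint ptups (k : nat) : seq (seq nat) :=
  match k with
  | 0 => [:: [::]]
  | k'.+1 => [seq i :: t | i <- iota 0 d, t <- ptups k']
  end.

Lemma ptups_S k : ptups k.+1 = [seq i :: t | i <- iota 0 d, t <- ptups k].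
Proof. by []. Qed.

Lemma mem_ptups k t : (t \in ptups k) = (size t == k) && all (fun i => i < d) t.
Proof.
elim: k t => [|k IH] t; first by case: t.
rewrite ptups_S.
case: t => [|x t].
  apply/negbTE/negP; case/allpairsP => -[i c] [_ _]; done.
apply/allpairsP/idP.
  move=> [[i c] [Hi Hc [-> ->]]] /=.
  move: Hc Hi; rewrite IH mem_iota => /andP[/eqP -> ->] /andP[_ Hi]. by rewrite /= eqxx Hi.
rewrite /= eqSS => /andP[Hs /andP [Hx Ha]].
exists (x, t); split => //=.
  by rewrite mem_iota.
by rewrite IH Hs.
Qed.

Lemma size_ptups k : size (ptups k) = (d ^ k)%N.
Proof. by elim: k => [|k IH] //; rewrite ptups_S size_allpairs size_iota IH expnS. Qed.

Lemma uniq_ptups k : uniq (ptups k).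
Proof.
elim: k => [|k IH] //.
rewrite ptups_S; apply: allpairs_uniq => //; first exact: iota_uniq.
by move=> [x c] [y c'] _ _ /= [-> ->].
Qed.
End Ptups.

End Sec_A.

Section Sec_C.
Set Implicit Arguments. Unset Strict Implicit. Unset Printing Implicit Defensive.

Lemma leq_expl m n e : m <= n -> m ^ e <= n ^ e.
Proof. by case: e => [|e] H //; rewrite leq_exp2r. Qed.

Lemma ffact_le_exp x k : x ^_ k <= x ^ k.
Proof.
elim: k => [|k IH]; first by rewrite ffactn0 expn0.
rewrite ffactnSr expnSr leq_mul //; apply: leq_subr.
Qed.

Lemma exp_le_ffact x k : (x - k) ^ k <= x ^_ k.
Proof.
elim: k => [|k IH]; first by rewrite ffactn0 expn0.
rewrite ffactnSr expnSr leq_mul //; last by lia.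
apply: leq_trans IH; apply: leq_expl; lia.
Qed.

Lemma subn_exp_le a b q : b <= a -> a ^ q - b ^ q <= (a - b) * q * a ^ q.-1.
Proof.
move=> Hba; rewrite subn_exp -mulnA leq_mul2l; apply/orP; right.
apply: leq_trans (_ : \sum_(i < q) a ^ q.-1 <= _).
  apply: leq_sum => i _.
  apply: leq_trans (_ : a ^ (q.-1 - i) * a ^ i <= _).
    by rewrite leq_mul2l leq_expl ?orbT.
  rewrite -expnD; have := ltn_ord i; move=> Hi.
  by rewrite subnK //; lia.
by rewrite sum_nat_const card_ord.
Qed.

Lemma term_bounds n c q : 0 < q -> c <= q.+1 ->
  (n - q.+1) ^ q <= (if c <= n then 'C(n - c + q, q) else 0) * q`! <= (n + q.+1) ^ q.
Proof.
move=> Hq Hc; case: ifP => Hcn.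
  rewrite bin_ffact; apply/andP; split.
    apply: leq_trans (exp_le_ffact _ _); apply: leq_expl; lia.
  apply: leq_trans (ffact_le_exp _ _) _; apply: leq_expl; lia.
rewrite mul0n leq0n andbT.
have -> : n - q.+1 = 0 by move/negbT: Hcn; lia.
by rewrite exp0n.
Qed.

Lemma main_bounds n q : (n - q.+1) ^ q <= n ^ q <= (n + q.+1) ^ q.
Proof. by apply/andP; split; apply: leq_expl; lia. Qed.

End Sec_C.

Section Sec_F.
Set Implicit Arguments. Unset Strict Implicit. Unset Printing Implicit Defensive.

Lemma block_sum (f : nat -> nat) L e :
  \sum_(0 <= i < L) \sum_(0 <= j < e) f (i * e + j) = \sum_(0 <= k < L * e) f k.
Proof.
elim: L => [|L IH]; first by rewrite mul0n !big_geq.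
rewrite big_nat_recr //= IH.
rewrite (_ : L.+1 * e = L * e + e); last by lia.
rewrite [RHS](big_cat_nat _ (n := L * e)) //= ?leq_addr //.
congr (_ + _).
rewrite -{2}[L * e]add0n big_addn.
have -> : L * e + e - L * e = e by lia.
by apply: eq_big_nat => j _; rewrite addnC.
Qed.

Lemma row_sum (w : seq nat) p b e : p <= e ->
  \sum_(0 <= j < e.+1) (if j < p then (nth 0 w (b + j)).+1 else if j == p then 0 else nth 0 w (b + j.-1))
  = p + \sum_(0 <= j < e) nth 0 w (b + j).
Proof.
move=> Hp.
rewrite (big_cat_nat _ (n := p)) //=; last by lia.
rewrite (big_cat_nat _ (n := p) (m := 0) (p := e)) //=.
rewrite (eq_big_nat _ _ (F2 := fun j => (nth 0 w (b + j)).+1)); last first.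
  by move=> j /andP[_ ->].
rewrite big_nat_recl; last by lia.
rewrite ltnn eqxx add0n.
rewrite (eq_big_nat _ _ (m := p) (n := e) (F2 := fun j => nth 0 w (b + j))); last first.
  move=> j /andP[H1 H2]; have -> : (j.+1 < p) = false by apply/negbTE; rewrite -leqNgt; lia.
  by have -> : (j.+1 == p) = false by apply/negbTE/eqP; lia.
rewrite (eq_bigr (fun j => nth 0 w (b+j) + 1)); last by move=> j _; rewrite addn1.
rewrite big_split /= sum_nat_const_nat subn0 muln1.
lia.
Qed.

End Sec_F.

Section Sec_D.
Set Implicit Arguments. Unset Strict Implicit. Unset Printing Implicit Defensive.
Local Open Scope ring_scope.

Section Bigmin.
Variables (T : eqType) (F : T -> int) (x0 : int).

Lemma bigmin_le (r : seq T) j : j \in r -> \big[Num.min/x0]_(k <- r) F k <= F j.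
Proof.
elim: r => [|y r IH] //; rewrite in_cons big_cons => /orP[/eqP ->|/IH H].
  by rewrite ge_min lexx.
by rewrite ge_min H orbT.
Qed.

Lemma bigmin_in (r : seq T) :
  \big[Num.min/x0]_(k <- r) F k = x0 \/ exists2 j, j \in r & \big[Num.min/x0]_(k <- r) F k = F j.
Proof.
elim: r => [|y r IH]; first by left; rewrite big_nil.
rewrite big_cons minEle; case: ifP => H.
  by right; exists y; rewrite ?mem_head.
case: IH => [->|[j Hj ->]]; [by left | right; exists j => //; rewrite in_cons Hj orbT]; done.
Qed.
End Bigmin.

Section Rowmin.
Variables (l d : nat) (hd : (0 < d)%N).

Lemma head_entry (a : Zld l d) i : exists j, head 0 [seq a i j | j <- enum 'I_d] = a i j.
Proof.
case E: (enum 'I_d) => [|j s].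
  by move: (size_enum_ord d); rewrite E /=; move: hd; lia.
by exists j.
Qed.

Lemma rowmin_le (a : Zld l d) i j : rowmin a i <= a i j.
Proof. by apply: bigmin_le; rewrite mem_index_enum. Qed.

Lemma rowmin_ex (a : Zld l d) i : exists j, rowmin a i = a i j.
Proof.
rewrite /rowmin; have [j0 Hj0] := head_entry a i.
case: (bigmin_in (fun j => a i j) (head 0 [seq a i j | j <- enum 'I_d]) (index_enum 'I_d)) => [->|[j _ ->]].
  by exists j0.
by exists j.
Qed.

Lemma rowmin_eq (a : Zld l d) i v : (forall j, v <= a i j) -> (exists j, a i j = v) -> rowmin a i = v.
Proof.
move=> Hv [j Hj]; apply/le_anti/andP; split.
  by rewrite -Hj rowmin_le.
by have [k ->] := rowmin_ex a i.
Qed.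
End Rowmin.

End Sec_D.

Section Sec_E.
Local Open Scope ring_scope.

Lemma part1 l d (hl : (0 < l)%N) (hd : (0 < d)%N) N (a : Zld l d) :
  in_cone a -> degM a = (N * (l - 1) * d)%:Z ->
  0 <= phiM a /\ phiM a <= ((l - 1) * N)%:Z.
Proof.
move=> [x [Hx [t Ht]]] Hdeg; split.
  pose c := fun i : 'I_l => if val i == 0%N then \sum_(k : 'I_l | val k != 0%N) t k else - t i.
  have Hc : forall i, - c i <= (rowmin a i)%:~R.
    move=> i; have [j ->] := rowmin_ex hd a i.
    have := Ht i j; have := Hx i j; rewrite /c; lra.
  have Hs : \sum_i c i = 0.
    pose i0 : 'I_l := Ordinal hl.
    rewrite (bigD1 i0) //=.
    have E : forall i : 'I_l, (i != i0) = (\val i != 0%N).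
      by move=> i; rewrite -val_eqE.
    have -> : \sum_(i | i != i0) c i = - \sum_(k : 'I_l | \val k != 0%N) t k.
      rewrite (eq_bigl _ _ E) -sumrN; apply: eq_bigr => i Hi; rewrite /c (negbTE Hi) //.
    by rewrite /c /= subrr.
  rewrite -(ler0z R) /phiM rmorph_sum /=.
  apply: le_trans (ler_sum _ (fun i _ => Hc i)).
  by rewrite sumrN Hs oppr0.
have H1 : phiM a *+ d <= degM a.
  rewrite /phiM /degM -sumrMnl; apply: ler_sum => i _.
  rewrite -[d in _ *+ d]card_ord -sumr_const; apply: ler_sum => j _.
  exact: rowmin_le.
move: H1; rewrite Hdeg -mulr_natr.
have -> : ((N * (l - 1) * d)%:Z) = ((l-1) * N)%:Z * d%:R by rewrite natz -PoszM; congr Posz; lia.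
by rewrite ler_pM2r // ltr0n.
Qed.

End Sec_E.

Section Sec_G.
Set Implicit Arguments. Unset Strict Implicit. Unset Printing Implicit Defensive.
Local Open Scope ring_scope.

Section Mk.
Variables (l e m : nat) (hl : (0 < l)%N).
Local Notation d := e.+1.

Definition ent (p w : seq nat) (i j : nat) : nat :=
  if (j < nth 0%N p i)%N then (nth 0%N w (i * e + j)).+1
  else if j == nth 0%N p i then 0%N else nth 0%N w (i * e + j.-1).

Definition mkmat (pw : seq nat * seq nat) : Zld l d :=
  \matrix_(i, j) ((if val i == 0%N then m else 0) + ent pw.1 pw.2 i j)%N%:Z.

Definition inner n (p : seq nat) :=
  if (sumn p <= n)%N then comps (l * e) (n - sumn p) else [::].

Definition codes n := [seq (p, w) | p <- ptups d l, w <- inner n p].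

Definition valid n (pw : seq nat * seq nat) :=
  [/\ size pw.1 = l, all (fun i => i < d)%N pw.1, size pw.2 = (l * e)%N
    & (sumn pw.1 + sumn pw.2)%N = n].

Lemma mem_codes n pw : pw \in codes n <-> valid n pw.
Proof.
case: pw => p w; split.
  case/allpairsPdep => p' [w' [Hp Hw [-> ->]]].
  move: Hp; rewrite mem_ptups => /andP[/eqP Hs Ha].
  move: Hw; rewrite /inner; case: ifP => Hle //.
  rewrite mem_comps => /andP[/eqP Hw /eqP Hsw].
  by split => //=; lia.
move=> [/= Hs Ha Hw Hsum]; apply/allpairsPdep; exists p, w; split => //.
  by rewrite mem_ptups Hs eqxx.
rewrite /inner; have -> : (sumn p <= n)%N by lia.
by rewrite mem_comps Hw eqxx /=; apply/eqP; lia.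
Qed.

Lemma nth_lt p i : all (fun i => i < d)%N p -> (i < size p)%N -> (nth 0%N p i < d)%N.
Proof. by move=> /all_nthP H Hi; apply: H. Qed.

Lemma sumn_ord (p : seq nat) : size p = l -> (\sum_(i < l) nth 0%N p i)%N = sumn p.
Proof. by move=> Hs; rewrite sumnE (big_nth 0) Hs big_mkord. Qed.

Lemma degM_mk n pw : valid n pw -> degM (mkmat pw) = (d * m + n)%N%:Z.
Proof.
case: pw => p w [/= Hp Ha Hw Hs]; rewrite /degM.
have -> : \sum_(i < l) \sum_(j < d) mkmat (p, w) i j =
   (\sum_(i < l) \sum_(j < d) ((if val i == 0%N then m else 0) + ent p w i j))%N%:Z.
  rewrite -natz natr_sum; apply: eq_bigr => i _; rewrite natr_sum; apply: eq_bigr => j _.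
  by rewrite mxE natz.
congr Posz.
rewrite (eq_bigr (fun i : 'I_l => (if val i == 0%N then m else 0) * d + (nth 0%N p i + \sum_(0 <= j < e) nth 0%N w (i * e + j))))%N; last first.
  move=> i _; rewrite big_split /= sum_nat_const card_ord mulnC; congr (_ + _).
  rewrite -(big_mkord xpredT (fun j => ent p w i j)) /ent row_sum //.
  have := nth_lt Ha (_ : (i < size p)%N); rewrite Hp ltn_ord => /(_ isT); lia.
rewrite big_split /= big_split /= sumn_ord //.
rewrite -(big_mkord xpredT (fun i => \sum_(0 <= j < e) nth 0%N w (i * e + j)))%N block_sum.
rewrite -(big_mkord xpredT (fun i => (if i == 0%N then m else 0) * d))%N.
rewrite big_ltn // big_nat_cond big1 ?addn0; last by move=> i /andP[/andP[H _] _]; case: ifP => //; lia.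
have -> : (\sum_(0 <= k < l * e) nth 0%N w k)%N = sumn w by rewrite [RHS]sumnE [RHS](big_nth 0) Hw.
rewrite eqxx; lia.
Qed.


Lemma nth_valid n p w (i : 'I_l) : valid n (p, w) -> (nth 0%N p i < d)%N.
Proof. by move=> [/= Hp Ha _ _]; apply: nth_lt Ha _; rewrite Hp ltn_ord. Qed.

Lemma mk_ge (pw : seq nat * seq nat) i j : ((if val i == 0%N then m else 0)%N%:Z <= mkmat pw i j).
Proof. by rewrite mxE lez_nat leq_addr. Qed.

Lemma mk_zero n p w (i : 'I_l) (Hv : valid n (p, w)) :
  mkmat (p, w) i (Ordinal (nth_valid i Hv)) = (if val i == 0%N then m else 0)%N%:Z.
Proof. by rewrite mxE /ent /= ltnn eqxx addn0. Qed.

Lemma rowmin_mk n pw (i : 'I_l) : valid n pw -> rowmin (mkmat pw) i = (if val i == 0%N then m else 0)%N%:Z.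
Proof.
case: pw => p w Hv; apply: (rowmin_eq (ltn0Sn e)).
  by move=> j; apply: mk_ge.
by exists (Ordinal (nth_valid i Hv)); rewrite (mk_zero i Hv).
Qed.

Lemma phiM_mk n pw : valid n pw -> phiM (mkmat pw) = m%:Z.
Proof.
move=> Hv; rewrite /phiM (eq_bigr _ (fun i _ => rowmin_mk i Hv)).
rewrite (bigD1 (Ordinal hl)) //= big1 ?addr0 // => i Hi.
have -> : (\val i == 0%N) = false by apply/negbTE; move: Hi; apply: contra => /eqP H; apply/eqP/val_inj.
by [].
Qed.

Lemma cone_mk pw : in_cone (mkmat pw).
Proof.
exists (\matrix_(i, j) ((mkmat pw i j)%:~R : R)); split.
  by move=> i j; rewrite mxE ler0z (le_trans _ (mk_ge pw i j)).
exists (fun _ => 0) => i j; rewrite mxE subrr big1 ?oppr0 //; by case: ifP.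
Qed.

Lemma degM_inL (x : Zld l d) : inL x -> degM x = 0.
Proof.
move=> [t Ht]; rewrite /degM.
rewrite (eq_bigr (fun i : 'I_l => (if val i == 0%N then \sum_(k < l | val k != 0%N) t k else - t i) *+ d)); last first.
  by move=> i _; rewrite (eq_bigr _ (fun j _ => Ht i j)) sumr_const card_ord.
rewrite (bigD1 (Ordinal hl)) //=.
have E : forall i : 'I_l, (i != Ordinal hl) = (\val i != 0%N) by move=> i; rewrite -val_eqE.
have -> : \sum_(i < l | i != Ordinal hl) (if \val i == 0%N then \sum_(k < l | \val k != 0%N) t k else - t i) *+ d
   = - (\sum_(k < l | \val k != 0%N) t k) *+ d.
  rewrite (eq_bigl _ _ E) -sumrN -sumrMnl; apply: eq_bigr => i Hi; rewrite (negbTE Hi) //.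
by rewrite /= -mulrnDl subrr mul0rn.
Qed.

Lemma degM_equiv (a b : Zld l d) : equivM a b -> degM a = degM b.
Proof.
move/degM_inL => H; apply/eqP; rewrite -subr_eq0 -H /degM -sumrB.
by apply/eqP/eq_bigr => i _; rewrite -sumrB; apply: eq_bigr => j _; rewrite !mxE.
Qed.


Lemma subE (A B : Zld l d) i j : (A - B) i j = A i j - B i j.
Proof. by rewrite !mxE. Qed.

Lemma equiv_mk_eq n n' pw pw' : valid n pw -> valid n' pw' ->
  equivM (mkmat pw) (mkmat pw') -> mkmat pw = mkmat pw'.
Proof.
case: pw => p w; case: pw' => p' w' Hv Hv' [t Ht].
have Ht0 : forall i : 'I_l, (val i == 0%N) = false -> t i = 0.
  move=> i Hi.
  have H1 := Ht i (Ordinal (nth_valid i Hv)).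
  have H2 := Ht i (Ordinal (nth_valid i Hv')).
  have G1 := mk_ge (p', w') i (Ordinal (nth_valid i Hv)).
  have G2 := mk_ge (p, w) i (Ordinal (nth_valid i Hv')).
  rewrite subE (mk_zero i Hv) Hi in H1; rewrite subE (mk_zero i Hv') Hi in H2.
  rewrite Hi in G1 G2.
  lia.
apply/matrixP => i j; apply/eqP; rewrite -subr_eq0 -subE Ht.
case: ifP => H.
  by rewrite big1 // => k Hk; apply: Ht0; apply/negbTE.
by rewrite Ht0 ?oppr0.
Qed.

Lemma ent_eq n n' p w p' w' : valid n (p, w) -> valid n' (p', w') ->
  mkmat (p, w) = mkmat (p', w') ->
  forall i j, (i < l)%N -> (j < d)%N -> ent p w i j = ent p' w' i j.
Proof.
move=> _ _ H i j Hi Hj.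
have := congr1 (fun M : Zld l d => M (Ordinal Hi) (Ordinal Hj)) H.
by rewrite !mxE /=; case; move/addnI.
Qed.

Lemma mk_inj n n' pw pw' : valid n pw -> valid n' pw' -> mkmat pw = mkmat pw' -> pw = pw'.
Proof.
case: pw => p w; case: pw' => p' w' Hv Hv' H.
have E := ent_eq Hv Hv' H.
case: (Hv) => /= Hp Ha Hw _; case: (Hv') => /= Hp' Ha' Hw' _.
have Hpp : p = p'.
  apply: (eq_from_nth (x0 := 0%N)); first by rewrite Hp Hp'.
  move=> i Hi; have Hil : (i < l)%N by rewrite -Hp.
  have L1 := nth_lt Ha Hi.
  have L2 := nth_lt Ha' (_ : (i < size p')%N); rewrite Hp' in L2; have {}L2 := L2 Hil.
  case: (ltngtP (nth 0%N p i) (nth 0%N p' i)) => // Hlt.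
    by have := E i (nth 0%N p i) Hil L1; rewrite /ent ltnn eqxx Hlt.
  by have := E i (nth 0%N p' i) Hil L2; rewrite /ent ltnn eqxx Hlt.
subst p'; congr pair.
apply: (eq_from_nth (x0 := 0%N)); first by rewrite Hw Hw'.
move=> k Hk; rewrite Hw in Hk.
have He : (0 < e)%N by move: Hk; case: (e) => //; rewrite muln0.
have Hk' : k = (k %/ e * e + k %% e)%N by rewrite -divn_eq.
have Hi : (k %/ e < l)%N by rewrite ltn_divLR.
have Hj : (k %% e < e)%N by rewrite ltn_pmod.
case: (ltnP (k %% e) (nth 0%N p (k %/ e))) => Hlt.
  have := E _ _ Hi (leqW Hj); rewrite /ent Hlt -Hk'. by case.
have := E _ (k %% e).+1 Hi Hj; rewrite /ent.
have -> : ((k %% e).+1 < nth 0%N p (k %/ e))%N = false by apply/negbTE; rewrite -leqNgt; lia.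
have -> : ((k %% e).+1 == nth 0%N p (k %/ e))%N = false by apply/negbTE/eqP; lia.
by rewrite /= -Hk'.
Qed.

Lemma uniq_codes n : uniq (codes n).
Proof.
apply: allpairs_uniq_dep; first exact: uniq_ptups.
  by move=> p _; rewrite /inner; case: ifP => // _; exact: uniq_comps.
by move=> [x c] [y c'] _ _ /= [-> ->].
Qed.


Section Complete.
Variable a : Zld l d.

Definition oi (i : nat) : 'I_l := Ordinal (ltn_pmod i hl).
Definition oj (j : nat) : 'I_d := Ordinal (ltn_pmod j (ltn0Sn e)).
Definition Bn (i j : nat) : int := a (oi i) (oj j) - rowmin a (oi i).
Definition Pn (i : nat) : nat := find (fun j => Bn i j == 0) (iota 0 d).
Definition wf (i j : nat) : nat := if (j < Pn i)%N then (`|Bn i j|.-1)%N else `|Bn i j.+1|%N.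
Definition pcode := mkseq Pn l.
Definition wcode := mkseq (fun k => wf (k %/ e) (k %% e)) (l * e).

Lemma oi_val (i : 'I_l) : oi i = i.
Proof. by apply: val_inj; rewrite /= modn_small. Qed.
Lemma oj_val (j : 'I_d) : oj j = j.
Proof. by apply: val_inj; rewrite /= modn_small. Qed.

Lemma Bn_ord (i : 'I_l) (j : 'I_d) : Bn i j = a i j - rowmin a i.
Proof. by rewrite /Bn oi_val oj_val. Qed.

Lemma Bn_ge0 i j : 0 <= Bn i j.
Proof. by rewrite /Bn subr_ge0 rowmin_le. Qed.

Lemma has_Pn i : has (fun j => Bn i j == 0) (iota 0 d).
Proof.
have [j0 Hj0] := rowmin_ex (ltn0Sn e) a (oi i).
apply/hasP; exists (val j0); first by rewrite mem_iota /= ltn_ord.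
by rewrite /Bn (_ : oj j0 = j0) ?oj_val // Hj0 subrr.
Qed.

Lemma Pn_lt i : (Pn i < d)%N.
Proof. by have := has_Pn i; rewrite has_find size_iota. Qed.

Lemma Pn_before i j : (j < Pn i)%N -> Bn i j != 0.
Proof.
move=> H; have := before_find 0%N H; rewrite nth_iota ?add0n; first by move/negbT.
by apply: leq_trans (Pn_lt i); apply: ltnW.
Qed.

Lemma Pn_at i : Bn i (Pn i) = 0.
Proof. by have := nth_find 0%N (has_Pn i); rewrite nth_iota ?add0n ?Pn_lt // => /eqP. Qed.

Lemma ent_code i j : (i < l)%N -> (j < d)%N -> ent pcode wcode i j = `|Bn i j|%N.
Proof.
move=> Hi Hj; rewrite /ent /pcode nth_mkseq //.
case: (ltngtP j (Pn i)) => H.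
- have He : (j < e)%N by have := Pn_lt i; lia.
  rewrite nth_mkseq; last by nia.
  have He0 : (0 < e)%N by lia.
  rewrite divnMDl // divn_small // addn0 modnMDl modn_small // /wf H prednK //.
  rewrite absz_gt0; exact: Pn_before.
- have Hj1 : (j.-1 < e)%N by lia.
  have He0 : (0 < e)%N by lia.
  have Hnl : ((j < Pn i)%N = false) by apply/negbTE; rewrite -leqNgt; lia.
  have Hne : ((j == Pn i) = false) by apply/negbTE/eqP; lia.
  rewrite nth_mkseq; last by nia.
  rewrite divnMDl // divn_small // addn0 modnMDl modn_small // /wf.
  have -> : ((j.-1 < Pn i)%N = false) by apply/negbTE; rewrite -leqNgt; lia.
  by rewrite prednK //; lia.
- by rewrite H Pn_at.
Qed.

Lemma mk_code (i : 'I_l) (j : 'I_d) :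
  mkmat (pcode, wcode) i j = (if val i == 0%N then m else 0)%N%:Z + (a i j - rowmin a i).
Proof.
rewrite mxE /= PoszD ent_code // gez0_abs ?Bn_ge0 //.
by rewrite Bn_ord.
Qed.

Lemma valid_code : valid (sumn pcode + sumn wcode) (pcode, wcode).
Proof.
split => //=; rewrite ?size_mkseq //.
apply/(all_nthP 0%N) => i; rewrite size_mkseq => Hi; rewrite nth_mkseq //; exact: Pn_lt.
Qed.

Lemma equiv_code : phiM a = m%:Z -> equivM a (mkmat (pcode, wcode)).
Proof.
move=> Hphi; exists (fun k => - rowmin a k) => i j.
rewrite subE mk_code.
case: ifP => H.
  have E : forall k : 'I_l, (k != i) = (val k != 0%N).
    by move=> k; rewrite -val_eqE /= (eqP H).
  rewrite sumrN -(eq_bigl _ _ E).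
  move: Hphi; rewrite /phiM (bigD1 i) //= => <-.
  lra.
by rewrite opprK; lra.
Qed.

Lemma complete n : phiM a = m%:Z -> degM a = (d * m + n)%N%:Z ->
  exists2 pw, valid n pw & equivM a (mkmat pw).
Proof.
move=> Hphi Hdeg; exists (pcode, wcode); last exact: equiv_code.
have := degM_equiv (equiv_code Hphi); rewrite (degM_mk valid_code) Hdeg.
case => Hn; have Hn' : n = (sumn pcode + sumn wcode)%N by lia.
by rewrite Hn'; exact: valid_code.
Qed.
End Complete.

End Mk.

End Sec_G.

Section Sec_H.
Set Implicit Arguments. Unset Strict Implicit. Unset Printing Implicit Defensive.
Local Open Scope ring_scope.

Lemma sumn_le (p : seq nat) e : all (fun i => i < e.+1)%N p -> (sumn p <= size p * e)%N.
Proof.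
elim: p => [|x p IH] //= /andP[Hx Ha]; have := IH Ha; rewrite mulSn; lia.
Qed.

Lemma abs_aux (y Q A B D : R) : y * Q = A - B -> 0 <= D -> A <= B + D -> B <= A + D -> 1 <= Q -> `|y| <= D.
Proof.
move=> E HD H1 H2 HQ.
case: (lerP 0 y) => Hy.
  move: (ler_peMr Hy HQ) => Hq; rewrite ler_norml; apply/andP; split; lra.
have Hy' : 0 <= - y by lra.
move: (ler_peMr Hy' HQ) => Hq; rewrite ler_norml; apply/andP; split; lra.
Qed.

Lemma real_step (a B q D : nat) :
  (a * q`! <= B + D)%N -> (B <= a * q`! + D)%N ->
  `| a%:R - B%:R / (q`!)%:R : R| <= D%:R.
Proof.
move=> H1 H2.
have HQ : (1 <= (q`!)%:R :> R) by rewrite ler1n fact_gt0.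
have HQ0 : (q`!)%:R != 0 :> R by rewrite pnatr_eq0 -lt0n fact_gt0.
apply: (abs_aux (Q := (q`!)%:R) (A := (a * q`!)%:R) (B := B%:R)) => //.
- by rewrite natrM mulrBl divfK.
- by rewrite -natrD ler_nat.
- by rewrite -natrD ler_nat.
Qed.

Lemma term_real n c q : (0 < q)%N -> (c <= q.+1)%N ->
  `|(if (c <= n)%N then 'C(n - c + q, q) else 0%N)%:R - (n ^ q)%:R / (q`!)%:R : R|
    <= (2 * q.+1 * q * (n + q.+1) ^ q.-1)%:R.
Proof.
move=> Hq Hc.
have /andP[T1 T2] := term_bounds n Hq Hc.
have /andP[M1 M2] := main_bounds n q.
apply: le_trans (real_step (D := (n + q.+1) ^ q - (n - q.+1) ^ q) _ _) _.
- set A := (_ * _)%N in T1 T2 *; lia.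
- set A := (_ * _)%N in T1 T2 *; lia.
rewrite ler_nat.
apply: leq_trans (subn_exp_le q (_ : n - q.+1 <= n + q.+1)%N) _; first by lia.
by rewrite leq_mul // leq_mul //; lia.
Qed.

End Sec_H.

Section Sec_I.
Set Implicit Arguments. Unset Strict Implicit. Unset Printing Implicit Defensive.
Local Open Scope ring_scope.


Lemma sumdiff (r : seq (seq nat)) (F G : seq nat -> R) B :
  (forall i, i \in r -> `|F i - G i| <= B) ->
  `|\sum_(i <- r) F i - \sum_(i <- r) G i| <= B *+ size r.
Proof.
move=> H; rewrite -sumrB; apply: le_trans (ler_norm_sum _ _ _) _.
rewrite -[size r]count_predT -iter_addr_0 -big_const_seq big_seq [X in _ <= X]big_seq.
by apply: ler_sum => i Hi; apply: H.
Qed.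

Lemma natmul_le (X k : nat) : ((X%:R : R) *+ k <= (k * X)%N%:R).
Proof. by rewrite -mulrnA [(k * X)%N]mulnC. Qed.

Lemma count_bound l e n q : (l * e)%N = q.+1 -> (0 < q)%N ->
  `| (size (codes l e n))%:R - (e.+1 ^ l * n ^ q)%N%:R / (q`!)%:R : R|
   <= (e.+1 ^ l * (2 * q.+1 * q * (n + q.+1) ^ q.-1))%N%:R.
Proof.
move=> Hr Hq.
have Hsz : forall p, size (inner l e n p) = if (sumn p <= n)%N then 'C(n - sumn p + q, q) else 0%N.
  by move=> p; rewrite /inner; case: ifP => // _; rewrite Hr size_comps.
rewrite /codes size_allpairs_dep sumnE big_map natr_sum.
under eq_bigr do rewrite Hsz.
have HS : \sum_(p <- ptups e.+1 l) ((n ^ q)%:R / (q`!)%:R) = (e.+1 ^ l * n ^ q)%N%:R / (q`!)%:R :> R.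
  by rewrite big_const_seq count_predT iter_addr_0 size_ptups -mulrnAl -mulr_natl natrM.
move: HS; set T := (_ / _ : R) => HS.
move: HS; set S := (\sum_(p <- _) _ : R) => HS.
have {HS}-> : T = S by rewrite HS.
rewrite /S.
apply: le_trans (sumdiff (B := (2 * q.+1 * q * (n + q.+1) ^ q.-1)%N%:R) _) _.
  move=> p Hp; apply: term_real => //.
  move: Hp; rewrite mem_ptups => /andP[/eqP Hs Ha].
  by rewrite -Hr; have := sumn_le Ha; rewrite Hs.
rewrite size_ptups; exact: natmul_le.
Qed.

End Sec_I.

Unset Implicit Arguments.
Local Open Scope ring_scope.

Lemma fin_bound (a b c : nat) : (a <= b * c)%N -> (a%:R : R) <= b%:R * c%:R.
Proof. by rewrite -natrM ler_nat. Qed.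

Lemma conv_lemma (x y z Q : nat) (S B : R) : (x * y = z)%N ->
  `|S - z%:R / Q%:R| <= B -> `|S - x%:R * y%:R / Q%:R| <= B.
Proof. by move=> H; rewrite -natrM H. Qed.

Theorem mainTheorem13 (l d : nat) (hl : (2 <= l)%N) (hd : (2 <= d)%N) :
  (forall (N : nat) (a : Zld l d), in_cone a ->
     degM a = (N * (l - 1) * d)%:Z ->
     0 <= phiM a /\ phiM a <= ((l - 1) * N)%:Z) /\
  (exists C : R, exists N0 : nat, forall N : nat, (N0 <= N)%N ->
     forall m : nat, (m <= (l - 1) * N)%N ->
     exists s : seq (Zld l d), reps_of (@Pset l d N m) s /\
       `| (size s)%:R
          - (d ^ (l * d - 1))%N%:R
            * ((N * (l - 1) - m) ^ (l * (d - 1) - 1))%N%:R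
            / ((l * (d - 1) - 1)`!)%N%:R |
       <= C * (N ^ (l * (d - 1) - 2))%N%:R).
Proof.
have hl0 : (0 < l)%N by lia.
split.
  move=> N a Hc Hdeg; have hd0 : (0 < d)%N by lia.
  exact: (@part1 l d hl0 hd0 N a Hc Hdeg).
case: d hd => [|e] // hd.
have [q Hr] : exists q, (l * e)%N = q.+1 by exists (l * e).-1; lia.
have Hq : (0 < q)%N by nia.
exists (e.+1 ^ l * (2 * q.+1 * q * (e.+1 * (l - 1) + q.+1) ^ q.-1))%N%:R, 1%N.
move=> N HN m Hm.
pose n := (e.+1 * (N * (l - 1) - m))%N.
have Hdn : (e.+1 * m + n = N * e.+1 * (l - 1))%N.
  rewrite /n -mulnDr; have -> : (m + (N * (l - 1) - m) = N * (l - 1))%N by lia.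
  by rewrite mulnCA mulnA.
exists (map (mkmat l e m) (codes l e n)); split.
  have Hinj : {in codes l e n &, injective (mkmat l e m)}.
    move=> x y Hx Hy Hxy; apply: (mk_inj hl0 (n:=n) (n':=n) _ _ Hxy); exact/(mem_codes e hl0).
  have Us : uniq (map (mkmat l e m) (codes l e n)).
    by rewrite (map_inj_in_uniq Hinj); apply: uniq_codes.
  split; [|split].
  - move=> a /mapP [pw Hpw ->]; have Hv := (mem_codes e hl0 n pw).1 Hpw.
    split; first exact: cone_mk.
    split; first exact: (phiM_mk m hl0 Hv).
    by rewrite (degM_mk m hl0 Hv) Hdn.
  - move=> a [_ [Hphi Hdeg]].
    have Hd' : degM a = (e.+1 * m + n)%N%:Z by rewrite Hdeg Hdn.
    have [pw Hv Heq] := complete hl0 Hphi Hd'.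
    exists (mkmat l e m pw) => //; apply: map_f; exact/(mem_codes e hl0).
  - move=> i j Hi Hj Heq; apply/eqP; rewrite -(nth_uniq 0 Hi Hj Us); apply/eqP.
    rewrite size_map in Hi Hj.
    move: Heq; rewrite !(nth_map ([::], [::])) // => Heq.
    by apply: (equiv_mk_eq hl0 _ _ Heq); apply/(mem_codes e hl0); apply: mem_nth.
have CB := count_bound n Hr Hq.
rewrite size_map.
have E1 : (l * (e.+1 - 1) - 1 = q)%N by lia.
have E2 : (l * e.+1 - 1 = l + q)%N by lia.
have E3 : (l * (e.+1 - 1) - 2 = q.-1)%N by lia.
rewrite E1 E2 E3.
apply: (@conv_lemma _ _ (e.+1 ^ l * n ^ q)%N); first by rewrite /n expnD expnMn mulnA.
apply: le_trans CB _.
apply: fin_bound.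
have HY : ((n + q.+1) ^ q.-1 <= (e.+1 * (l - 1) + q.+1) ^ q.-1 * N ^ q.-1)%N.
  rewrite -expnMn; apply: leq_expl.
  have H1 : (n <= e.+1 * (N * (l - 1)))%N by rewrite /n leq_mul2l leq_subr orbT.
  have H2 : (q.+1 <= q.+1 * N)%N by rewrite leq_pmulr.
  rewrite mulnDl; apply: leq_add => //.
  by apply: leq_trans H1 _; rewrite -mulnA [(N * _)%N]mulnC.
apply: (leq_trans (_ : _ <= e.+1 ^ l * (2 * q.+1 * q * ((e.+1 * (l - 1) + q.+1) ^ q.-1 * N ^ q.-1)))%N).
  by rewrite leq_mul2l leq_mul2l HY !orbT.
by rewrite !mulnA.
Qed.
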